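(* In the setting described in the context (no inter-cell interference), suppose the target rate $R_{\tilde k}>0$ satisfies $$R_{\tilde k}<\log_2\left(1+\frac{\beta_{\tilde k}^2|\mu_{\tilde k}|^2}{\sum_{i=1}^K|\zeta_{\tilde i}|^2+\beta_k^2\beta_{\tilde k}^2|\mu_{\tilde k}|^2+\frac{\sigma_{\tilde k}^2}{P\ell(d_{\tilde k})}}\right).$$ Then the outage probability $p_{\tilde k}=\Pr\left(\log_2(1+\mathrm{SINR}_{\tilde k})<R_{\tilde k}\right)$ tends to $0$ as $\sigma_h^2\to0$ (equivalently, as the channel K factor $\mathcal K=\|\hat{\mathbf H}\|_F^2/(\sigma_h^2\mathrm{Tr}(\mathbf R_t)\mathrm{Tr}(\mathbf R_r))\to\infty$), with all other quantities held fixed.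
   Context: Let $K\le\min\{M,N\}$ be positive integers and $k\in\{1,\dots,K\}$. Fix an estimated channel $\hat{\mathbf H}\in\mathbb C^{N\times M}$, Hermitian positive definite correlation matrices $\mathbf R_r\in\mathbb C^{N\times N}$, $\mathbf R_t\in\mathbb C^{M\times M}$, and $\sigma_h^2>0$. The channel-estimation error is $\mathbf E=\mathbf R_r^{1/2}\mathbf E_w\mathbf R_t^{1/2}$ with $\mathrm{vec}(\mathbf E_w)\sim\mathcal{CN}(\mathbf 0,\sigma_h^2\mathbf I_{NM})$. Fix a precoder $\mathbf V=(\mathbf v_1,\dots,\mathbf v_K)\in\mathbb C^{M\times K}$ with $\|\mathbf v_i\|=1$, a nonzero receive filter $\mathbf u\in\mathbb C^N$ (of the far user $\tilde k$), power coefficients $\beta_k,\beta_{\tilde k}\ge0$ with $\beta_k^2+\beta_{\tilde k}^2=1$, transmit power $P>0$, distance $d_{\tilde k}>0$, path loss $\ell(d)=d^{-\alpha}$ with $\alpha>2$, noise variance $\sigma^2\ge0$, and $\sigma_{\tilde k}^2=\sigma^2\|\mathbf u\|^2$. The far user's SINR (with no inter-cell interference) is $$\mathrm{SINR}_{\tilde k}=\frac{P\ell(d_{\tilde k})|\mathbf u^{\mathrm H}\hat{\mathbf H}\mathbf v_k|^2\beta_{\tilde k}^2}{P\ell(d_{\tilde k})\left(|\mathbf u^{\mathrm H}\mathbf E\mathbf v_k|^2\beta_{\tilde k}^2+|\mathbf u^{\mathrm H}(\hat{\mathbf H}+\mathbf E)\mathbf v_k|^2\beta_k^2+\sum_{i\ne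 k}|\mathbf u^{\mathrm H}(\hat{\mathbf H}+\mathbf E)\mathbf v_i|^2\right)+\sigma_{\tilde k}^2}.$$ Define $\mu_{\tilde i}=\mathbf u^{\mathrm H}\hat{\mathbf H}\mathbf v_i$ ($i=1,\dots,K$), $\tilde{\boldsymbol\nu}=(\mu_{\tilde 1},\dots,\mu_{\widetilde{k-1}},\beta_k^2\mu_{\tilde k},\mu_{\widetilde{k+1}},\dots,\mu_{\tilde K})^{\mathrm T}$, $\tilde{\boldsymbol\Sigma}=\sigma_h^2(\mathbf u^{\mathrm H}\mathbf R_r\mathbf u)(\mathbf V^{\mathrm H}\mathbf R_t\mathbf V)^{\mathrm T}$ (the covariance of $(\mathbf u^{\mathrm H}\mathbf E\mathbf V)^{\mathrm T}$), with eigendecomposition $\tilde{\boldsymbol\Sigma}=\tilde{\boldsymbol\Psi}\tilde{\boldsymbol\Delta}\tilde{\boldsymbol\Psi}^{\mathrm H}$ ($\tilde{\boldsymbol\Psi}$ unitary), and let $\zeta_{\tilde i}$ be the $i$-th entry of $\tilde{\boldsymbol\Psi}^{\mathrm H}\tilde{\boldsymbol\nu}$. *)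

(* Defs.v *)
From HB Require Import structures.
From mathcomp Require Import all_boot all_order all_algebra.
From mathcomp Require Import all_classical all_reals all_analysis.
From mathcomp Require Import complex.
From mathcomp Require Import sesquilinear spectral.

Set Implicit Arguments.
Unset Strict Implicit.
Unset Printing Implicit Defensive.
Import Order.TTheory GRing.Theory Num.Theory.

Local Open Scope ring_scope.
Local Open Scope classical_set_scope.

Section Defs.
Variable R : realType.
Local Notation C := R[i].

Definition sqmod (z : C) : R := complex.Re z ^+ 2 + complex.Im z ^+ 2.

Definition ctr m n (A : 'M[C]_(m, n)) : 'M[C]_(n, m) := map_mx conjc (A^T).

Definition hermitian n (A : 'M[C]_n) : Prop := ctr A = A.

Definition posdef n (A : 'M[C]_n) : Prop :=
  hermitian A /\ forall x : 'cV[C]_n, x != 0 -> 0 < (ctr x *m A *m x) 0 0.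

Definition sqnorm n (x : 'cV[C]_n) : R := \sum_(i < n) sqmod (x i 0).

Definition log2 (x : R) : R := ln x / ln 2.

Definition pathloss (alpha d : R) : R := d `^ (- alpha).

Definition uAv N M K (u : 'cV[C]_N) (A : 'M[C]_(N, M)) (V : 'M[C]_(M, K))
  (i : 'I_K) : C := (ctr u *m A *m col i V) 0 0.

(* SINR of the far user, as a function of the estimation error E *)
Definition sinr_far N M K (k : 'I_K) (Hh : 'M[C]_(N, M)) (V : 'M[C]_(M, K))
  (u : 'cV[C]_N) (bk bt P alpha d sigma2 : R) (E : 'M[C]_(N, M)) : R :=
  let PL := P * pathloss alpha d in
  (PL * sqmod (uAv u Hh V k) * bt ^+ 2) /
  (PL * (sqmod (uAv u E V k) * bt ^+ 2
         + sqmod (uAv u (Hh + E) V k) * bk ^+ 2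
         + \sum_(i < K | i != k) sqmod (uAv u (Hh + E) V i))
   + sigma2 * sqnorm u).

Definition nu_vec N M K (k : 'I_K) (Hh : 'M[C]_(N, M)) (V : 'M[C]_(M, K))
  (u : 'cV[C]_N) (bk : R) : 'cV[C]_K :=
  \col_(i < K) (if i == k then ((bk ^+ 2)%:C)%C * uAv u Hh V i else uAv u Hh V i).

(* Sigma~ / sigma_h^2 = (u^H R_r u) (V^H R_t V)^T *)
Definition Sigma0 N M K (Rr : 'M[C]_N) (Rt : 'M[C]_M) (V : 'M[C]_(M, K))
  (u : 'cV[C]_N) : 'M[C]_K :=
  (ctr u *m Rr *m u) 0 0 *: (ctr V *m Rt *m V)^T.

Definition mutually_independent d (T : measurableType d) (I : finType)
  (Pr : probability T R) (X : I -> T -> R) : Prop :=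
  forall (J : {set I}) (B : I -> set R), (forall i, measurable (B i)) ->
    Pr (\bigcap_(i in [set j | j \in J]) (X i @^-1` B i))%classic
    = (\prod_(i in J) Pr (X i @^-1` B i)%classic)%E.

End Defs.

(* Main.v *)
Require Import Defs.
From HB Require Import structures.
From mathcomp Require Import all_boot all_order all_algebra.
From mathcomp Require Import all_classical all_reals all_analysis.
From mathcomp Require Import complex.
From mathcomp Require Import sesquilinear spectral.
From mathcomp Require Import measurable_realfun.
From mathcomp Require Import ring lra.
Import Order.TTheory GRing.Theory Num.Theory.
Local Open Scope ring_scope.
Local Open Scope classical_set_scope.
Section Aux.
Variable R : realType.

Lemma log2_charac (num Rk x : R) : 0 < num -> 0 < Rk -> 0 <= x ->
  (log2 (1 + num / x) < Rk) =
  ((x == 0) || (num / (expR (Rk * ln 2) - 1) < x)).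
Proof.
move=> hn hR hx.
have l2 : 0 < ln (2:R) by apply: ln_gt0; lra.
have y1 : 1 < expR (Rk * ln 2) by rewrite expR_gt1 mulr_gt0.
have [->|xn0] := eqVneq x 0.
  by rewrite invr0 mulr0 addr0 /log2 ln1 mul0r hR.
have xp : 0 < x by rewrite lt_def xn0.
rewrite /= /log2 ltr_pdivrMr // -[X in _ < X]expRK ltr_ln ?posrE.
- set y := expR _. rewrite [in RHS]ltr_pdivrMr ?subr_gt0 // addrC -ltrBrDr ltr_pdivrMr // mulrC.
  by [].
- by rewrite ltr_wpDr // divr_ge0 // ltW.
- by apply: expR_gt0.
Qed.

Lemma ReD (x y : R[i]) : complex.Re (x + y) = complex.Re x + complex.Re y.
Proof. by case: x => ? ?; case: y. Qed.
Lemma ImD (x y : R[i]) : complex.Im (x + y) = complex.Im x + complex.Im y.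
Proof. by case: x => ? ?; case: y. Qed.
Lemma ReM (x y : R[i]) : complex.Re (x * y) = complex.Re x * complex.Re y - complex.Im x * complex.Im y.
Proof. by case: x => ? ?; case: y. Qed.
Lemma ImM (x y : R[i]) : complex.Im (x * y) = complex.Re x * complex.Im y + complex.Im x * complex.Re y.
Proof. by case: x => ? ?; case: y. Qed.
Lemma Re0 : complex.Re (0 : R[i]) = 0. Proof. by []. Qed.
Lemma Im0 : complex.Im (0 : R[i]) = 0. Proof. by []. Qed.

Lemma sqmod_pert (x y : R[i]) (t : R) :
  sqmod (x + Complex t 0 * y) =
  (complex.Re x + t * complex.Re y) ^+ 2 + (complex.Im x + t * complex.Im y) ^+ 2.
Proof. by rewrite /sqmod ReD ImD ReM ImM /=; congr (_ ^+ 2 + _ ^+ 2); ring. Qed.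

Lemma sqmod_sc (y : R[i]) (t : R) :
  sqmod (Complex t 0 * y) = t ^+ 2 * sqmod y.
Proof. by rewrite /sqmod ReM ImM /=; ring. Qed.

Lemma sqmod_ge0 (x : R[i]) : 0 <= sqmod x.
Proof. by rewrite /sqmod addr_ge0 // sqr_ge0. Qed.

Lemma pert_bound (ar ai br bi t : R) : 0 <= t <= 1 ->
  `| ((ar + t * br) ^+ 2 + (ai + t * bi) ^+ 2) - (ar ^+ 2 + ai ^+ 2) |
    <= t * ((ar ^+ 2 + ai ^+ 2) + 2 * (br ^+ 2 + bi ^+ 2)).
Proof.
move=> /andP[t0 t1].
have h1 : 0 <= t * (ar - br) ^+ 2 by rewrite mulr_ge0 // sqr_ge0.
have h2 : 0 <= t * (ar + br) ^+ 2 by rewrite mulr_ge0 // sqr_ge0.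
have h3 : 0 <= t * (ai - bi) ^+ 2 by rewrite mulr_ge0 // sqr_ge0.
have h4 : 0 <= t * (ai + bi) ^+ 2 by rewrite mulr_ge0 // sqr_ge0.
have h5 : 0 <= t * (1 - t) * (br ^+ 2 + bi ^+ 2).
  by rewrite !mulr_ge0 ?subr_ge0 // addr_ge0 // sqr_ge0.
have h6 : 0 <= t * t * (br ^+ 2 + bi ^+ 2).
  by rewrite !mulr_ge0 // addr_ge0 // sqr_ge0.
rewrite ler_norml; apply/andP; split; nra.
Qed.
End Aux.

Section Meas.
Variables (R : realType) (d : measure_display) (T : measurableType d).

Definition mC (f : T -> R[i]) :=
  measurable_fun setT (fun w => complex.Re (f w)) /\
  measurable_fun setT (fun w => complex.Im (f w)).

Lemma mC_cst c : mC (fun _ => c).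
Proof. by split; exact: measurable_cst. Qed.

Lemma mC_add f g : mC f -> mC g -> mC (fun w => f w + g w).
Proof.
move=> [f1 f2] [g1 g2]; split.
  have -> : (fun w => complex.Re (f w + g w)) =
    (fun w => complex.Re (f w)) \+ (fun w => complex.Re (g w)).
    by apply: funext => w; rewrite ReD.
  exact: measurable_funD.
have -> : (fun w => complex.Im (f w + g w)) =
  (fun w => complex.Im (f w)) \+ (fun w => complex.Im (g w)).
  by apply: funext => w; rewrite ImD.
exact: measurable_funD.
Qed.

Lemma mC_mul f g : mC f -> mC g -> mC (fun w => f w * g w).
Proof.
move=> [f1 f2] [g1 g2]; split.
  have -> : (fun w => complex.Re (f w * g w)) =
    ((fun w => complex.Re (f w)) \* (fun w => complex.Re (g w))) \-
    ((fun w => complex.Im (f w)) \* (fun w => complex.Im (g w))).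
    by apply: funext => w; rewrite ReM.
  by apply: measurable_funB; apply: measurable_funM.
have -> : (fun w => complex.Im (f w * g w)) =
  ((fun w => complex.Re (f w)) \* (fun w => complex.Im (g w))) \+
  ((fun w => complex.Im (f w)) \* (fun w => complex.Re (g w))).
  by apply: funext => w; rewrite ImM.
by apply: measurable_funD; apply: measurable_funM.
Qed.

Lemma mC_sum (I : Type) (s : seq I) (F : I -> T -> R[i]) :
  (forall i, mC (F i)) -> mC (fun w => \sum_(i <- s) F i w).
Proof.
move=> hF; elim: s => [|a s [ih1 ih2]].
  have -> : (fun w : T => \sum_(i <- [::]) F i w) = fun _ => 0.
    by apply: funext => w; rewrite big_nil.
  exact: mC_cst.
have -> : (fun w : T => \sum_(i <- a :: s) F i w) =
  (fun w => F a w + \sum_(i <- s) F i w).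
  by apply: funext => w; rewrite big_cons.
exact: mC_add.
Qed.

Definition mM m n (A : T -> 'M[R[i]]_(m, n)) := forall i j, mC (fun w => A w i j).
Arguments mM {m n}.

Lemma mM_cst m n (A : 'M[R[i]]_(m, n)) : mM (fun _ => A).
Proof. by move=> i j; exact: mC_cst. Qed.

Lemma mM_mul m n p (A : T -> 'M[R[i]]_(m, n)) (B : T -> 'M[R[i]]_(n, p)) :
  mM A -> mM B -> mM (fun w => A w *m B w).
Proof.
move=> hA hB i j.
have -> : (fun w => (A w *m B w) i j) = (fun w => \sum_(l < n) A w i l * B w l j).
  by apply: funext => w; rewrite mxE.
by apply: mC_sum => l; apply: mC_mul.
Qed.

Lemma mC_sqmod f : mC f -> measurable_fun setT (fun w => sqmod (f w)).
Proof.
move=> [f1 f2]; rewrite /sqmod.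
apply: (measurable_funD (f := fun w => complex.Re (f w) ^+ 2) (g := fun w => complex.Im (f w) ^+ 2)); exact: measurable_funX.
Qed.
End Meas.
Arguments mC {R d T}.
Arguments mM {R d T m n}.

Section Prob.
Variables (R : realType) (d : measure_display) (T : measurableType d).
Local Open Scope ereal_scope.

Lemma final_cvg (f : R -> \bar R) : (forall s, 0 <= f s) ->
  (forall e : R, (0 < e)%R -> \forall s \near 0^'+, f s <= e%:E) ->
  f @ 0^'+ --> 0.
Proof.
move=> f0 hf; apply/fine_cvgP; split.
  have := hf 1%R ltr01; apply: filterS => s hs.
  by rewrite ge0_fin_numE ?f0 // (le_lt_trans hs) // ltry.
apply/cvgrPdist_le => e e0; have := hf e e0; apply: filterS => s hs.
have fs : f s \is a fin_num by rewrite ge0_fin_numE ?f0 // (le_lt_trans hs) // ltry.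
rewrite sub0r normrN ger0_norm; last by rewrite fine_ge0.
by rewrite -lee_fin fineK.
Qed.

Lemma tail_small (Pr : probability T R) (S : T -> R) :
  measurable_fun setT S -> forall e : R, (0 < e)%R ->
  exists n : nat, Pr [set w | (n%:R <= S w)%R] <= e%:E.
Proof.
move=> hS e e0.
pose F := fun n : nat => [set w | (n%:R <= S w)%R].
have mF : forall n, measurable (F n).
  move=> n; have := hS measurableT _ (measurable_itv `[n%:R, +oo[%R).
  rewrite setTI; congr measurable; apply/seteqP; split => w /=;
  by rewrite in_itv /= andbT.
have capF : \bigcap_n F n = set0.
  apply/seteqP; split => // w /= hw.
  have [n hn] : exists n : nat, (S w < n%:R)%R.
    exists (Num.trunc (`|S w|)).+1.
    apply: (le_lt_trans (ler_norm _)); exact: truncnS_gt.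
  have := hw n I; rewrite /F /=; lra.
have : (Pr \o F) @ \oo --> 0.
  rewrite -(measure0 Pr) -capF; apply: nonincreasing_cvg_mu => //.
  - by rewrite (le_lt_trans (probability_le1 _ _)) ?ltry.
  - by rewrite capF.
  - move=> m n mn; apply/subsetPset => w /=; rewrite /F /=.
    move=> h; apply: le_trans h; rewrite ler_nat //.
move=> /fine_cvgP[_ /cvgrPdist_lt /(_ e e0) hn].
have [N _ hN] := hn; exists N.
have := hN N (leqnn N); rewrite /= sub0r normrN => h.
have fN : Pr (F N) \is a fin_num by rewrite ge0_fin_numE ?measure_ge0 // (le_lt_trans (probability_le1 _ _)) ?ltry.
rewrite -(fineK fN) lee_fin; apply: ltW; apply: le_lt_trans h; exact: ler_norm.
Qed.
End Prob.

Section Pure.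
Variable R : realType.

Lemma log2_charac_le (num Rk x : R) : 0 < num -> 0 < Rk -> 0 <= x ->
  (log2 (1 + num / x) <= Rk) =
  ((x == 0) || (num / (expR (Rk * ln 2) - 1) <= x)).
Proof.
move=> hn hR hx.
have l2 : 0 < ln (2:R) by apply: ln_gt0; lra.
have y1 : 1 < expR (Rk * ln 2) by rewrite expR_gt1 mulr_gt0.
have [->|xn0] := eqVneq x 0.
  by rewrite invr0 mulr0 addr0 /log2 ln1 mul0r ltW.
have xp : 0 < x by rewrite lt_def xn0.
rewrite /= /log2 ler_pdivrMr // -[X in _ <= X]expRK ler_ln ?posrE.
- set y := expR _. rewrite [in RHS]ler_pdivrMr ?subr_gt0 // addrC -lerBrDr ler_pdivrMr // mulrC.
  by [].
- by rewrite ltr_wpDr // divr_ge0 // ltW.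
- by apply: expR_gt0.
Qed.

Lemma den_bound (t PL bk2 bt2 fk gk hk Sg Sh D : R) :
  0 <= t <= 1 -> 0 < PL -> 0 <= bk2 <= 1 -> 0 <= bt2 <= 1 ->
  0 <= gk -> 0 <= hk -> 0 <= Sg -> 0 <= Sh ->
  `|fk - gk| <= t * (gk + 2 * hk) ->
  `|D| <= t * Sg + 2 * t * Sh ->
  `| PL * (t ^+ 2 * hk * bt2 + fk * bk2 + (Sg + D)) - PL * (0 * bt2 + gk * bk2 + Sg) |
    <= PL * t * ((gk + Sg) + 3 * (hk + Sh)).
Proof.
move=> /andP[t0 t1] PL0 /andP[bk0 bk1] /andP[bt0 bt1] g0 h0 sg0 sh0 hf hD.
have e : PL * (t ^+ 2 * hk * bt2 + fk * bk2 + (Sg + D)) - PL * (0 * bt2 + gk * bk2 + Sg)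
   = PL * (t ^+ 2 * hk * bt2 + (fk - gk) * bk2 + D) by ring.
rewrite e normrM (gtr0_norm PL0) -[PL * t * _]mulrA ler_pM2l //.
have h1 : `|t ^+ 2 * hk * bt2| <= t * hk.
  rewrite ger0_norm ?mulr_ge0 ?exprn_ge0 //.
  have : t ^+ 2 * hk * bt2 <= t ^+ 2 * hk by rewrite ler_piMr // mulr_ge0 // exprn_ge0.
  move=> h; apply: (le_trans h); rewrite expr2 -mulrA ler_piMl // mulr_ge0 //.
have h2 : `|(fk - gk) * bk2| <= t * (gk + 2 * hk).
  rewrite normrM (ger0_norm bk0); apply: le_trans hf; rewrite ler_piMr //.
apply: (le_trans (ler_normD _ _)); apply: (le_trans (lerD (ler_normD _ _) (lexx _))).
have h3 : 0 <= t * Sh by rewrite mulr_ge0.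
lra.
Qed.
End Pure.

Section Mx.
Local Open Scope sesquilinear_scope.
Variable R : realType.

Lemma Re_sum (I : Type) (s : seq I) (P : pred I) (F : I -> R[i]) :
  complex.Re (\sum_(i <- s | P i) F i) = \sum_(i <- s | P i) complex.Re (F i).
Proof. exact: (big_morph _ (@ReD R) (@Re0 R)). Qed.

Lemma sqnorm_Re n (x : 'cV[R[i]]_n) : sqnorm x = complex.Re ((ctr x *m x) 0 0).
Proof.
rewrite /sqnorm mxE Re_sum; apply: eq_bigr => i _.
rewrite /ctr !mxE; case: (x i 0) => p q; rewrite /sqmod /=; ring.
Qed.

Lemma ctr_mul m n p (A : 'M[R[i]]_(m, n)) (B : 'M[R[i]]_(n, p)) :
  ctr (A *m B) = ctr B *m ctr A.
Proof. by rewrite /ctr trmx_mul map_mxM. Qed.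

Lemma ctrK m n (A : 'M[R[i]]_(m, n)) : ctr (ctr A) = A.
Proof. by apply/matrixP => i j; rewrite /ctr !mxE conjcK. Qed.

Lemma sqnorm_unitary n (Psi : 'M[R[i]]_n) (x : 'cV[R[i]]_n) :
  Psi \is unitarymx -> sqnorm (ctr Psi *m x) = sqnorm x.
Proof.
move=> /unitarymxP hP.
have e : Psi ^t* = ctr Psi.
  by apply/matrixP => i j; rewrite /ctr !mxE; case: (Psi j i).
rewrite !sqnorm_Re ctr_mul ctrK mulmxA -[ctr x *m Psi *m ctr Psi]mulmxA -e hP mulmx1.
by [].
Qed.
End Mx.

Section Meas2.
Variables (R : realType) (d : measure_display) (T : measurableType d).

Lemma mM_add m n (A B : T -> 'M[R[i]]_(m, n)) :
  mM A -> mM B -> mM (fun w => A w + B w).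
Proof.
move=> hA hB i j.
have -> : (fun w => (A w + B w) i j) = (fun w => A w i j + B w i j).
  by apply: funext => w; rewrite mxE.
exact: mC_add.
Qed.

Lemma mM_scl m n (c : R[i]) (A : T -> 'M[R[i]]_(m, n)) :
  mM A -> mM (fun w => c *: A w).
Proof.
move=> hA i j.
have -> : (fun w => (c *: A w) i j) = (fun w => c * A w i j).
  by apply: funext => w; rewrite mxE.
by apply: mC_mul => //; exact: mC_cst.
Qed.

Lemma mM_Ew N M (X : 'I_N * 'I_M * bool -> T -> R) :
  (forall idx, measurable_fun setT (X idx)) ->
  mM (fun w => \matrix_(i < N, j < M) (Complex (X (i, j, false) w) (X (i, j, true) w))).
Proof.
move=> hX i j; split.
  have -> : (fun w => complex.Re ((\matrix_(i < N, j < M) (Complex (X (i, j, false) w) (X (i, j, true) w))) i j)) = X (i, j, false).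
    by apply: funext => w; rewrite mxE.
  exact: hX.
have -> : (fun w => complex.Im ((\matrix_(i < N, j < M) (Complex (X (i, j, false) w) (X (i, j, true) w))) i j)) = X (i, j, true).
  by apply: funext => w; rewrite mxE.
exact: hX.
Qed.
End Meas2.
Arguments mM_Ew {R d T N M X}.
Arguments mM_cst {R d T m n}.
Arguments mM_mul {R d T m n p A B}.
Arguments mM_add {R d T m n A B}.
Arguments mM_scl {R d T m n} c {A}.
Arguments mC_sqmod {R d T f}.
Arguments tail_small {R d T} Pr {S}.

Lemma msum_filter (R : realType) (d : measure_display) (T : measurableType d)
  (I : Type) (s : seq I) (P : pred I) (F : I -> T -> R) :
  (forall i, measurable_fun setT (F i)) ->
  measurable_fun setT (fun w => \sum_(i <- s | P i) F i w).
Proof.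
move=> hF; elim: s => [|a s ih].
  have -> : (fun w : T => \sum_(i <- [::] | P i) F i w) = fun _ => 0.
    by apply: funext => w; rewrite big_nil.
  exact: measurable_cst.
case hPa : (P a).
  have -> : (fun w : T => \sum_(i <- a :: s | P i) F i w) =
    (fun w => F a w + \sum_(i <- s | P i) F i w).
    by apply: funext => w; rewrite big_cons hPa.
  exact: measurable_funD.
have -> : (fun w : T => \sum_(i <- a :: s | P i) F i w) =
  (fun w => \sum_(i <- s | P i) F i w).
  by apply: funext => w; rewrite big_cons hPa.
exact: ih.
Qed.

Section Fin.
Variable R : realType.
Lemma sq_range (x y : R) : x ^+ 2 + y ^+ 2 = 1 -> 0 <= x ^+ 2 <= 1.
Proof. move=> h; have := sqr_ge0 y; have := sqr_ge0 x; move=> *; apply/andP; split; lra. Qed.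

Lemma final_contra (PL t m G Sw nR c den0 dens Dst : R) :
  0 < PL -> 0 <= t -> t <= m -> 0 < m -> 0 <= G -> 0 <= Sw -> Sw < nR ->
  m * (PL * (G + 3 * nR + 1)) <= c -> c <= den0 -> c <= Dst - den0 ->
  `|dens - den0| <= PL * t * (G + 3 * Sw) -> (dens == 0) || (Dst < dens) -> False.
Proof.
move=> PL0 t0 tm m0 G0 S0 Sn m2 c1 c2 hX hw.
have GS0 : 0 <= G + 3 * Sw by rewrite addr_ge0 // mulr_ge0.
have p1 : PL * t * (G + 3 * Sw) <= PL * m * (G + 3 * Sw).
  by rewrite ler_wpM2r // ler_wpM2l // ltW.
have q : 0 < PL * m * (3 * (nR - Sw) + 1).
  by rewrite mulr_gt0 ?mulr_gt0 // ltr_wpDl // mulr_ge0 // subr_ge0 ltW.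
have p2 : PL * m * (G + 3 * Sw) < c.
  have e : m * (PL * (G + 3 * nR + 1)) = PL * m * (G + 3 * Sw) + PL * m * (3 * (nR - Sw) + 1) by ring.
  lra.
move: hX; rewrite ler_norml => /andP[hX1 hX2].
move: hw => /orP[/eqP h0|hlt2]; lra.
Qed.
End Fin.

Theorem theorem5 (R : realType) (N M K : nat) (k : 'I_K)
  (hK : (K <= minn M N)%N)
  (Hh : 'M[R[i]]_(N, M)) (Rr Sr : 'M[R[i]]_N) (Rt St : 'M[R[i]]_M)
  (hRr : posdef Rr) (hRt : posdef Rt)
  (hSr : posdef Sr) (hSr2 : Sr *m Sr = Rr)
  (hSt : posdef St) (hSt2 : St *m St = Rt)
  (V : 'M[R[i]]_(M, K)) (hV : forall i : 'I_K, sqnorm (col i V) = 1)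
  (u : 'cV[R[i]]_N) (hu : u != 0)
  (bk bt : R) (hbk : 0 <= bk) (hbt : 0 <= bt) (hb : bk ^+ 2 + bt ^+ 2 = 1)
  (P d alpha sigma2 : R) (hP : 0 < P) (hd : 0 < d) (halpha : 2 < alpha)
  (hsigma2 : 0 <= sigma2)
  (Psi Delta : 'M[R[i]]_K) (hPsi : Psi \is unitarymx) (hDelta : is_diag_mx Delta)
  (hSigma : Sigma0 Rr Rt V u = Psi *m Delta *m ctr Psi)
  (Rk : R) (hRk : 0 < Rk)
  (hrate : Rk < log2 (1 + bt ^+ 2 * sqmod (uAv u Hh V k) /
       (sqnorm (ctr Psi *m nu_vec k Hh V u bk)
        + bk ^+ 2 * bt ^+ 2 * sqmod (uAv u Hh V k)
        + sigma2 * sqnorm u / (P * pathloss alpha d))))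
  (dT : measure_display) (T : measurableType dT) (Pr : probability T R)
  (X : 'I_N * 'I_M * bool -> T -> R)
  (hXmeas : forall idx, measurable_fun setT (X idx))
  (hXind : mutually_independent Pr X)
  (hXlaw : forall idx (A : set R), measurable A ->
     Pr (X idx @^-1` A) = normal_prob 0 (Num.sqrt (2^-1)) A) :
  let Ew := fun w : T =>
    \matrix_(i < N, j < M) (Complex (X (i, j, false) w) (X (i, j, true) w)) in
  (fun s : R =>
     Pr [set w | log2 (1 + sinr_far k Hh V u bk bt P alpha d sigma2
                   (Sr *m ((Complex (Num.sqrt s) 0) *: Ew w) *m St)) < Rk])
    @ 0^'+ --> 0%E.
Proof.
move=> Ew.
set PL := P * pathloss alpha d.
have PL0 : 0 < PL by rewrite mulr_gt0 // /pathloss powR_gt0.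
pose a i := uAv u Hh V i.
pose b w i := uAv u (Sr *m Ew w *m St) V i.
pose Es (s : R) w := Sr *m (Complex (Num.sqrt s) 0 *: Ew w) *m St.
pose num := PL * sqmod (a k) * bt ^+ 2.
pose den (E : 'M[R[i]]_(N, M)) := PL * (sqmod (uAv u E V k) * bt ^+ 2
         + sqmod (uAv u (Hh + E) V k) * bk ^+ 2
         + \sum_(i < K | i != k) sqmod (uAv u (Hh + E) V i)) + sigma2 * sqnorm u.
have sinrE E : sinr_far k Hh V u bk bt P alpha d sigma2 E = num / den E by [].
have uAvD A B i : uAv u (A + B) V i = uAv u A V i + uAv u B V i.
  by rewrite /uAv mulmxDr mulmxDl mxE.
have uAvS s w i : uAv u (Es s w) V i = Complex (Num.sqrt s) 0 * b w i.
  by rewrite /uAv /Es /b -!(scalemxAr, scalemxAl) mxE.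
have uAv0 i : uAv u 0 V i = 0 by rewrite /uAv mulmx0 mul0mx mxE.
have sqmod0 : sqmod (0 : R[i]) = 0 by rewrite /sqmod /= expr0n /= addr0.
have su0 : 0 <= sqnorm u.
  by rewrite /sqnorm; apply: sumr_ge0 => i _; exact: sqmod_ge0.
have den_ge0 E : 0 <= den E.
  apply: addr_ge0; last by rewrite mulr_ge0.
  apply: mulr_ge0; first exact: ltW.
  rewrite !addr_ge0 ?mulr_ge0 ?sqmod_ge0 ?exprn_ge0 //.
  by apply: sumr_ge0 => i _; exact: sqmod_ge0.
have num_ge0 : 0 <= num by rewrite /num mulr_ge0 ?exprn_ge0 // mulr_ge0 ?sqmod_ge0 // ltW.
have d0 : den 0 = PL * (sqmod (a k) * bk ^+ 2 + \sum_(i < K | i != k) sqmod (a i))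
     + sigma2 * sqnorm u.
  by rewrite /den uAv0 sqmod0 mul0r add0r addr0.
have thE : bt ^+ 2 * sqmod (uAv u Hh V k) /
       (sqnorm (ctr Psi *m nu_vec k Hh V u bk)
        + bk ^+ 2 * bt ^+ 2 * sqmod (uAv u Hh V k)
        + sigma2 * sqnorm u / (P * pathloss alpha d)) = num / den 0.
  rewrite sqnorm_unitary //.
  have sn : sqnorm (nu_vec k Hh V u bk) =
      (bk ^+ 2) ^+ 2 * sqmod (a k) + \sum_(i < K | i != k) sqmod (a i).
    rewrite /sqnorm (bigD1 k) //= mxE eqxx; congr (_ + _).
      exact: sqmod_sc.
    by apply: eq_bigr => i hi; rewrite mxE (negbTE hi).
  rewrite sn d0 -/PL -/(a k).
  set G' := \sum_(i < K | i != k) sqmod (a i).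
  have e : (bk ^+ 2) ^+ 2 * sqmod (a k) + G' + bk ^+ 2 * bt ^+ 2 * sqmod (a k)
      + sigma2 * sqnorm u / PL
      = (PL * (sqmod (a k) * bk ^+ 2 + G') + sigma2 * sqnorm u) / PL.
    have hbt2 : bt ^+ 2 = 1 - bk ^+ 2 by lra.
    rewrite hbt2; field; exact: lt0r_neq0.
  by rewrite e invf_div /num; ring.
rewrite thE in hrate.
have num0 : 0 < num.
  rewrite lt_def num_ge0 andbT; apply/eqP => h.
  move: hrate; rewrite h mul0r addr0 /log2 ln1 mul0r; lra.
have := hrate; rewrite ltNge log2_charac_le // negb_or => /andP[dn0 hlt].
rewrite -ltNge in hlt.
set Dst := num / _ in hlt.
have den0p : 0 < den 0 by rewrite lt_def dn0 den_ge0.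
pose c := Num.min (den 0) (Dst - den 0).
have c1 : c <= den 0 by rewrite /c ge_min lexx.
have c2 : c <= Dst - den 0 by rewrite /c ge_min lexx orbT.
have c0 : 0 < c by rewrite /c lt_min den0p subr_gt0 hlt.
have Aeqw s w : (log2 (1 + sinr_far k Hh V u bk bt P alpha d sigma2 (Es s w)) < Rk)
    = ((den (Es s w) == 0) || (Dst < den (Es s w))).
  by rewrite sinrE log2_charac ?den_ge0.
have Aeq s : [set w | log2 (1 + sinr_far k Hh V u bk bt P alpha d sigma2 (Es s w)) < Rk]
   = (fun w => den (Es s w)) @^-1` ([set 0] `|` `]Dst, +oo[).
  apply/seteqP; split => w hw.
    have : (log2 (1 + sinr_far k Hh V u bk bt P alpha d sigma2 (Es s w)) < Rk) := hw.
    rewrite Aeqw => /orP[/eqP h|h].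
      by change (den (Es s w) = 0 \/ (den (Es s w) \in `]Dst, +oo[%R)); left.
    by change (den (Es s w) = 0 \/ (den (Es s w) \in `]Dst, +oo[%R)); right; rewrite in_itv; change ((Dst < den (Es s w)) && true); rewrite andbT h.
  change (log2 (1 + sinr_far k Hh V u bk bt P alpha d sigma2 (Es s w)) < Rk).
  have : (den (Es s w) = 0 \/ (den (Es s w) \in `]Dst, +oo[%R)) := hw.
  rewrite Aeqw => -[->|]; first by rewrite eqxx.
  rewrite in_itv; change ((Dst < den (Es s w)) && true -> (den (Es s w) == 0) || (Dst < den (Es s w))).
  by rewrite andbT => ->; rewrite orbT.
have mEw : mM Ew := mM_Ew hXmeas.
have muAv (E : T -> 'M[R[i]]_(N, M)) i : mM E ->
    measurable_fun setT (fun w => sqmod (uAv u (E w) V i)).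
  move=> hE; apply: mC_sqmod; rewrite /uAv.
  exact: (mM_mul (mM_mul (mM_cst _) hE) (mM_cst _)) 0 0.
have mEs s : mM (Es s).
  exact: (mM_mul (mM_mul (mM_cst Sr) (mM_scl _ mEw)) (mM_cst St)).
have mHEs s : mM (fun w => Hh + Es s w) by apply: mM_add => //; exact: mM_cst.
have mden s : measurable_fun setT (fun w => den (Es s w)).
  rewrite /den; apply: measurable_funD; last exact: measurable_cst.
  apply: measurable_funM; first exact: measurable_cst.
  apply: measurable_funD; first apply: measurable_funD.
  - apply: measurable_funM; last exact: measurable_cst.
    exact: muAv.
  - apply: measurable_funM; last exact: measurable_cst.
    exact: (muAv (fun w => Hh + Es s w)).
  - apply: msum_filter => i; exact: (muAv (fun w => Hh + Es s w)).
have mA s : measurable [set w | log2 (1 + sinr_far k Hh V u bk bt P alpha d sigma2 (Es s w)) < Rk].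
  rewrite Aeq -[X in measurable X]setTI; apply: mden => //.
  by apply: measurableU => //; exact: measurable_itv.
pose S w := \sum_(i < K) sqmod (b w i).
have mS : measurable_fun setT S.
  apply: msum_filter => i; rewrite /b.
  exact: (muAv (fun w => Sr *m Ew w *m St)) (mM_mul (mM_mul (mM_cst _) mEw) (mM_cst _)).
apply: final_cvg; first by move=> s; exact: measure_ge0.
move=> e e0.
have [n hn] := tail_small Pr mS _ e0.
pose G := \sum_(i < K) sqmod (a i).
have G0 : 0 <= G by apply: sumr_ge0 => i _; exact: sqmod_ge0.
pose m := Num.min 1 (c / (PL * (G + 3 * n%:R + 1))).
have Gn0 : 0 < PL * (G + 3 * n%:R + 1).
  by rewrite mulr_gt0 //; apply: ltr_wpDl => //; rewrite addr_ge0 // mulr_ge0.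
have m0 : 0 < m by rewrite /m lt_min ltr01 divr_gt0.
have m1 : m <= 1 by rewrite /m ge_min lexx.
have m2 : m * (PL * (G + 3 * n%:R + 1)) <= c.
  rewrite -ler_pdivlMr //; rewrite /m ge_min lexx orbT //.
near=> s.
have s0 : 0 < s by near: s; exact: nbhs_right_gt.
have sm : s < m ^+ 2 by near: s; apply: nbhs_right_lt; rewrite exprn_gt0.
set t := Num.sqrt s.
have t0 : 0 <= t by exact: sqrtr_ge0.
have tm : t < m.
  rewrite ltNge; apply/negP => h.
  have : m ^+ 2 <= t ^+ 2 by rewrite ler_pXn2r // ?nnegrE // ltW.
  by rewrite sqr_sqrtr ?(ltW s0) // leNgt sm.
apply: (le_trans _ hn); apply: le_measure.
- by rewrite inE; exact: (mA s).
- rewrite inE; have := mS measurableT _ (measurable_itv `[n%:R, +oo[%R).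
  rewrite setTI; congr measurable; apply/seteqP; split => w hw.
    have : (S w \in `[n%:R, +oo[%R) := hw.
    by rewrite in_itv => /andP[h _].
  have h : (n%:R <= S w)%R := hw.
  change (S w \in `[n%:R, +oo[%R); rewrite in_itv; apply/andP; split => //.
move=> w hw; change (n%:R <= S w); rewrite leNgt; apply/negP => hSw.
have hw' : (log2 (1 + sinr_far k Hh V u bk bt P alpha d sigma2 (Es s w)) < Rk) := hw.
rewrite Aeqw in hw'.
have t1 : t <= 1 by apply: ltW; apply: lt_le_trans tm m1.
have bk2 : 0 <= bk ^+ 2 <= 1 by exact: sq_range hb.
have bt2 : 0 <= bt ^+ 2 <= 1 by apply: (@sq_range _ bt bk); rewrite addrC.
pose f i := sqmod (a i + Complex t 0 * b w i).
pose Sg := \sum_(i < K | i != k) sqmod (a i).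
pose Sh := \sum_(i < K | i != k) sqmod (b w i).
pose D := \sum_(i < K | i != k) (f i - sqmod (a i)).
have e1 : den (Es s w) = PL * (t ^+ 2 * sqmod (b w k) * bt ^+ 2 + f k * bk ^+ 2 + (Sg + D))
    + sigma2 * sqnorm u.
  rewrite /den; congr (PL * (_ + _ + _) + _).
  - by rewrite uAvS sqmod_sc.
  - by rewrite uAvD uAvS.
  - rewrite /Sg /D -big_split; apply: eq_bigr => i _.
    by rewrite uAvD uAvS [RHS]addrC subrK.
have e0' : den 0 = PL * (0 * bt ^+ 2 + sqmod (a k) * bk ^+ 2 + Sg) + sigma2 * sqnorm u.
  by rewrite d0 mul0r add0r.
have pt i : `|f i - sqmod (a i)| <= t * (sqmod (a i) + 2 * sqmod (b w i)).
  rewrite /f sqmod_pert /sqmod; apply: pert_bound; rewrite t0 t1.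
  by [].
have Sg0 : 0 <= Sg by apply: sumr_ge0 => i _; exact: sqmod_ge0.
have Sh0 : 0 <= Sh by apply: sumr_ge0 => i _; exact: sqmod_ge0.
have hD : `|D| <= t * Sg + 2 * t * Sh.
  apply: le_trans (ler_norm_sum _ _ _) _.
  apply: le_trans (ler_sum _ (fun i _ => pt i)) _.
  have -> : t * Sg + 2 * t * Sh =
      \sum_(i < K | i != k) t * (sqmod (a i) + 2 * sqmod (b w i)).
    rewrite /Sg /Sh !mulr_sumr -big_split; apply: eq_bigr => i _; change (t * sqmod (a i) + 2 * t * sqmod (b w i) = t * (sqmod (a i) + 2 * sqmod (b w i))); ring.
  exact: lexx.
have tt : 0 <= t <= 1 by rewrite t0 t1.
have B := @den_bound R _ _ _ _ _ _ _ _ _ _ tt PL0 bk2 bt2 (@sqmod_ge0 R (a k)) (@sqmod_ge0 R (b w k))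
  Sg0 Sh0 (pt k) hD.
have GE : G = sqmod (a k) + Sg by rewrite /G (bigD1 k).
have SE : S w = sqmod (b w k) + Sh by rewrite /S (bigD1 k).
have hX : `|den (Es s w) - den 0| <= PL * t * (G + 3 * S w).
  have -> : den (Es s w) - den 0 =
     PL * (t ^+ 2 * sqmod (b w k) * bt ^+ 2 + f k * bk ^+ 2 + (Sg + D))
     - PL * (0 * bt ^+ 2 + sqmod (a k) * bk ^+ 2 + Sg) by rewrite e1 e0'; ring.
  by rewrite GE SE.
have S0 : 0 <= S w by rewrite /S; apply: sumr_ge0 => i _; exact: sqmod_ge0.
exact: (@final_contra R _ _ _ _ _ _ _ _ _ _ PL0 t0 (ltW tm) m0 G0 S0 hSw m2 c1 c2 hX hw').
Unshelve. all: end_near.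
Qed.
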